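(* Let $n$ be a positive integer and let $i,j$ be integers with $1\leq i\leq j-2\leq n-2$. Then for all permutations $p$ of length $n$, $c_i(c_j(p))=c_j(c_i(p))$.
   Context: For a string $s$ of distinct integers with underlying set $S$, the complement of $s$ relative to $S$ is the string obtained from $s$ by replacing, for each $j$, the $j$th smallest element of $S$ by the $j$th largest element of $S$. For $1\leq i\leq n$, $c_i$ is the map on permutations $p=p_1p_2\cdots p_n$ of length $n$ that leaves $p_1\cdots p_{i-1}$ unchanged and replaces the string $p_ip_{i+1}\cdots p_n$ by its complement relative to its underlying set $\{p_i,\dots,p_n\}$. *)

(* Defs.v *)
From mathcomp Require Import all_boot.
Set Implicit Arguments. Unset Strict Implicit. Unset Printing Implicit Defensive.

(* Strings of distinct integers are represented as [seq nat]; a permutation of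
   length n is a sequence p with [perm_eq p (iota 1 n)] (values 1..n).
   Positions are 1-indexed as in the paper. *)

Definition rank_in (s : seq nat) (x : nat) : nat := count (fun y => y < x) s.

(* complement of s relative to its underlying set: the (r+1)-th smallest element
   is replaced by the (r+1)-th largest, i.e. the element of index
   (size s - 1 - r) in the increasing sort of s. *)
Definition complement (s : seq nat) : seq nat :=
  [seq nth 0 (sort leq s) (size s - 1 - rank_in s x) | x <- s].

Definition c (i : nat) (p : seq nat) : seq nat :=
  take (i - 1) p ++ complement (drop (i - 1) p).

Definition is_perm_of_length (n : nat) (p : seq nat) : bool := perm_eq p (iota 1 n).

(* Main.v *)
Require Import Defs.
From mathcomp Require Import all_boot zify.
Set Implicit Arguments. Unset Strict Implicit.

Definition phi (s : seq nat) (x : nat) := nth 0 (sort leq s) (size s - 1 - rank_in s x).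

Lemma count_tri x s : count (fun y => y < x) s + count (fun y => x < y) s + count (pred1 x) s = size s.
Proof.
elim: s => //= y s IH; rewrite -IH.
case: (ltngtP y x) => h /=; lia.
Qed.

Lemma rank_lt (s : seq nat) (x y : nat) : x \in s -> x < y -> rank_in s x < rank_in s y.
Proof.
move=> xs xy.
have H : count (fun z => z < x) s + count (pred1 x) s <= count (fun z => z < y) s.
  elim: s {xs} => //= z s IH.
  case: (ltngtP z x) => h /=; case: (ltnP z y) => h2; lia.
have : 0 < count (pred1 x) s by rewrite -has_count has_pred1.
rewrite /rank_in. lia.
Qed.

Lemma rank_le s x y : x <= y -> rank_in s x <= rank_in s y.
Proof. move=> xy; apply: sub_count => z /= zx; exact: leq_trans zx xy. Qed.

Lemma rank_inj (s : seq nat) (x y : nat) : x \in s -> y \in s -> rank_in s x = rank_in s y -> x = y.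
Proof.
move=> xs ys e; case: (ltngtP x y) => // h.
- by have := rank_lt xs h; rewrite e ltnn.
- by have := rank_lt ys h; rewrite e ltnn.
Qed.

Lemma rank_size (s : seq nat) (x : nat) : x \in s -> rank_in s x < size s.
Proof.
move=> xs; have := count_tri x s.
have : 0 < count (pred1 x) s by rewrite -has_count has_pred1.
rewrite /rank_in. lia.
Qed.

Lemma count_sorted_nth t k : sorted ltn t -> k < size t -> count (fun y => y < nth 0 t k) t = k.
Proof.
elim: t k => //= a t IH k st.
have all_a := order_path_min ltn_trans st.
have st' := path_sorted st.
case: k => [|k] /= ks.
  rewrite ltnn add0n; apply/eqP; rewrite -[_ == 0]negbK -lt0n -has_count.
  by apply/hasPn => z /(allP all_a) /= az; rewrite -leqNgt ltnW.
have ins : nth 0 t k \in t by apply: mem_nth.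
rewrite (allP all_a _ ins) IH //.
Qed.

Lemma perm_rank s t x : perm_eq s t -> rank_in s x = rank_in t x.
Proof. by move/permP => h; rewrite /rank_in h. Qed.

Lemma rank_nth_sort (s : seq nat) k : uniq s -> k < size s -> rank_in s (nth 0 (sort leq s) k) = k.
Proof.
move=> us ks.
have ps : perm_eq s (sort leq s) by rewrite perm_sym perm_sort.
rewrite (perm_rank _ ps) /rank_in count_sorted_nth //.
- by rewrite ltn_sorted_uniq_leq sort_uniq us (sort_sorted leq_total).
- by rewrite size_sort.
Qed.

Lemma phi_in (s : seq nat) (x : nat) : x \in s -> phi s x \in s.
Proof.
move=> xs; have := rank_size xs; rewrite /phi -(mem_sort leq) => h.
apply: mem_nth; rewrite size_sort; set m := size s in h *; lia.
Qed.

Lemma phi_rank (s : seq nat) (x : nat) : uniq s -> x \in s -> rank_in s (phi s x) = size s - 1 - rank_in s x.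
Proof.
move=> us xs; have := rank_size xs => h.
rewrite /phi rank_nth_sort //; lia.
Qed.

Lemma phi_dec (s : seq nat) (x y : nat) : uniq s -> x \in s -> y \in s -> x < y -> phi s y < phi s x.
Proof.
move=> us xs ys xy.
have h1 := rank_lt xs xy; have h2 := rank_size ys.
have r1 := phi_rank us xs; have r2 := phi_rank us ys.
rewrite ltnNge; apply/negP => /(rank_le s). lia.
Qed.

Lemma count_gt (s : seq nat) (x : nat) : uniq s -> x \in s -> count (fun y => x < y) s = size s - 1 - rank_in s x.
Proof.
move=> us xs; have := count_tri x s; have := count_uniq_mem x us; rewrite xs /rank_in.
move=> -> /=; lia.
Qed.

Lemma phi_perm (s t : seq nat) (x : nat) : uniq s -> perm_eq s t -> x \in s -> phi s x = phi t x.
Proof.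
move=> us pst xs.
have ut : uniq t by rewrite -(perm_uniq pst).
have xt : x \in t by rewrite -(perm_mem pst).
apply: (rank_inj (phi_in xs)); first by rewrite (perm_mem pst) phi_in.
rewrite phi_rank // (perm_rank (phi t x) pst) phi_rank // (perm_rank x pst) (perm_size pst); reflexivity.
Qed.

Lemma comp_perm (s : seq nat) : uniq s -> perm_eq (complement s) s.
Proof.
move=> us.
have inj : {in s &, injective (phi s)}.
  move=> x y xs ys e; case: (ltngtP x y) => // h.
  - by have := phi_dec us xs ys h; rewrite e ltnn.
  - by have := phi_dec us ys xs h; rewrite e ltnn.
have uc : uniq (complement s) by rewrite map_inj_in_uniq.
have sub : {subset complement s <= s} by move=> z /mapP [x xs ->]; apply: phi_in.
have [_ eqi] := uniq_min_size uc sub (eq_leq (esym (size_map (phi s) s))).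
exact: uniq_perm.
Qed.

Lemma phi_map (s : seq nat) (g : nat -> nat) (x : nat) : uniq s -> {in s &, forall a b, a < b -> g b < g a} -> x \in s ->
  phi (map g s) (g x) = g (phi s x).
Proof.
move=> us dec xs.
have inj : {in s &, injective g}.
  move=> a b a_s b_s e; case: (ltngtP a b) => // h.
  - by have := dec _ _ a_s b_s h; rewrite e ltnn.
  - by have := dec _ _ b_s a_s h; rewrite e ltnn.
have ugs : uniq (map g s) by rewrite map_inj_in_uniq.
have rk : forall z, z \in s -> rank_in (map g s) (g z) = size s - 1 - rank_in s z.
  move=> z zs; rewrite /rank_in count_map -count_gt //; apply: eq_in_count => w ws /=.
  case: (ltngtP w z) => h.
  - by apply/negbTE; rewrite -leqNgt ltnW // dec.
  - by rewrite dec.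
  - by subst w; rewrite ltnn.
have gxs : g x \in map g s by apply: map_f.
have pxs := phi_in xs.
apply: (rank_inj (phi_in gxs)); first by apply: map_f.
rewrite phi_rank // rk // rk // phi_rank // size_map.
have := rank_size xs; lia.
Qed.

Lemma compE (s : seq nat) : complement s = map (phi s) s.
Proof. by []. Qed.

Theorem mainTheorem2 (n i j : nat) :
  0 < n -> 1 <= i -> i <= j - 2 -> j - 2 <= n - 2 ->
  forall p : seq nat, is_perm_of_length n p ->
    c i (c j p) = c j (c i p).
Proof.
move=> n0 i1 ij jn p pp.
have sp : size p = n by rewrite (perm_size pp) size_iota.
have up : uniq p by rewrite (perm_uniq pp) iota_uniq.
rewrite /c.
have km : i - 1 < j - 1 by lia.
have mn : j - 1 <= size p by lia.
move: km mn; set k := i - 1; set m := j - 1 => km mn.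
set B := drop k (take m p); set C := drop m p.
have stm : size (take m p) = m by rewrite size_takel.
have eA : drop k p = B ++ C.
  by rewrite -{1}(cat_take_drop m p) drop_cat stm km.
have sB : size B = m - k by rewrite size_drop stm.
have uBC : uniq (B ++ C) by rewrite -eA drop_uniq.
have uC : uniq C by move: uBC; rewrite cat_uniq => /and3P [].
have -> : take k (take m p ++ complement C) = take k p.
  by rewrite takel_cat ?stm ?(ltnW km) // take_takel // ltnW.
have -> : drop k (take m p ++ complement C) = B ++ complement C.
  by rewrite drop_cat stm km.
rewrite eA (compE (B ++ C)) map_cat.
set f := phi (B ++ C).
rewrite take_cat size_takel; last by apply: leq_trans (ltnW km) mn.
rewrite ltnNge (ltnW km) /= take_size_cat ?size_map //.
rewrite drop_cat size_takel; last by apply: leq_trans (ltnW km) mn.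
rewrite ltnNge (ltnW km) /= drop_size_cat ?size_map //.
rewrite -catA; congr (_ ++ _).
have pC := comp_perm uC.
have pBC : perm_eq (B ++ complement C) (B ++ C) by rewrite perm_cat2l.
have uBC' : uniq (B ++ complement C) by rewrite (perm_uniq pBC).
have e1 : map (phi (B ++ complement C)) (B ++ complement C) = map f (B ++ complement C).
  by apply/eq_in_map => z zs; apply: (phi_perm uBC' pBC zs).
rewrite compE e1 map_cat; congr (_ ++ _).
rewrite compE -map_comp compE -map_comp; apply/eq_in_map => z zs /=.
rewrite phi_map //.
move=> a b a_s b_s ab; apply: phi_dec => //; by rewrite mem_cat ?a_s ?b_s orbT.
Qed.
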